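(* Let $1\le k\le n$ and let $Q_{n,k}(T)=\sum_{i=k}^n(-1)^{i-k}\binom{n}{i}T^i$ be the numerator polynomial of the standard graded Hilbert series of $M(n,k)$ (so $H_{M(n,k)}(T)=Q_{n,k}(T)/(1-T)^n$). Then for every integer $s\ge0$, as formal power series in $T$, $$\frac{Q_{n,k}(T)}{(1-T)^s}=\sum_{j=0}^\infty\left((-1)^j\binom{n-s}{k+j}+\sum_{t=1}^s\binom{n-t}{k-1}\binom{s-t+j}{s-t}\right)T^{j+k}$$ $$=\sum_{j=0}^\infty\left((-1)^j\binom{n-s}{k+j}+\sum_{\ell=0}^{k-1}\binom{j+\ell}{\ell}\binom{n-s-j-\ell-1}{k-\ell-1}\binom{s+j+\ell}{s-1}\right)T^{j+k}.$$
   Context: $M(n,k)$ is the $k$-th syzygy module of $K=R/(X_1,\dots,X_n)$, $R=K[X_1,\dots,X_n]$ with the standard grading, in the Koszul complex: the image of $\partial:\bigwedge^kR^n\to\bigwedge^{k-1}R^n$, where $e_{i_1}\wedge\dots\wedge e_{i_k}$ has degree $k$. Binomial coefficients $\binom{a}{b}$ are taken for integer $a$ and integer $b$ as $a(a-1)\cdots(a-b+1)/b!$ if $b\ge0$ and $0$ if $b<0$. *)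

(* Defs.v *)
From mathcomp Require Import all_boot all_order all_algebra.
Set Implicit Arguments. Unset Strict Implicit. Unset Printing Implicit Defensive.
Import Order.TTheory GRing.Theory Num.Theory.
Local Open Scope ring_scope.

Definition binZ (a b : int) : rat :=
  if b < 0 then 0
  else (\prod_(i < absz b) (a - (i : nat)%:Z)%:~R) / ((absz b)`!)%:R.

Definition fps := nat -> rat.

Definition fps_mul (f g : fps) : fps :=
  fun m => \sum_(i < m.+1) f i * g (m - i)%N.

Definition fps_of_poly (p : {poly rat}) : fps := fun m => p`_m.

Definition Qnk (n k : nat) : {poly rat} :=
  \sum_(k <= i < n.+1) (((-1) ^+ (i - k)) * ('C(n, i))%:R) *: 'X^i.

Definition shift_series (k : nat) (c : nat -> rat) : fps :=
  fun m => if (m < k)%N then 0 else c (m - k)%N.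

(* Main.v *)
Require Import Defs.
From mathcomp Require Import all_boot all_order all_algebra.
From mathcomp Require Import ring lra zify.
From Stdlib Require Import FunctionalExtensionality.
Import Order.TTheory GRing.Theory Num.Theory.
Local Open Scope ring_scope.


Lemma binZ_nat (a : int) (m : nat) :
  binZ a m = (\prod_(i < m) (a - (i : nat)%:Z)%:~R) / (m`!)%:R.
Proof. by rewrite /binZ. Qed.

Lemma binZ_neg (a b : int) : b < 0 -> binZ a b = 0.
Proof. by rewrite /binZ => ->. Qed.

Lemma binZ0 (a : int) : binZ a 0 = 1.
Proof. by rewrite binZ_nat big_ord0 divr1. Qed.

Lemma pascalZ (a : int) (m : nat) :
  binZ (a + 1) m.+1 = binZ a m.+1 + binZ a m.
Proof.
rewrite !binZ_nat big_ord_recl big_ord_recr /=.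
rewrite (eq_bigr (fun i : 'I_m => (a - (i : nat)%:Z)%:~R)); last first.
  by move=> i _; congr (_%:~R); rewrite /bump /= add1n -addn1 PoszD; ring.
rewrite factS natrM.
have h1 : (m`!)%:R != 0 :> rat by rewrite pnatr_eq0 -lt0n fact_gt0.
have h2 : (m.+1)%:R != 0 :> rat by rewrite pnatr_eq0.
rewrite !rmorphB !rmorphD /= subr0 rmorph1.
field; apply/andP; split; first exact: h1. by rewrite -natr1 addrC in h2.
Qed.

Lemma binZC (a b : nat) : binZ a b = ('C(a, b))%:R.
Proof.
elim: a b => [|a IH] [|b].
- by rewrite binZ0 bin0.
- by rewrite binZ_nat big_ord_recl /= subr0 mul0r mul0r bin0n.
- by rewrite binZ0 bin0.
- by rewrite -addn1 PoszD pascalZ !IH addn1 binS natrD addrC.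
Qed.


Lemma vand0 (p : nat) (v : int) :
  \sum_(l < p.+1) binZ (v - (l : nat)%:Z) (p - l)%N = binZ (v + 1) p.
Proof.
elim: p v => [|p IH] v.
  by rewrite big_ord_recl big_ord0 addr0 !binZ0.
rewrite big_ord_recl /= subr0 subn0.
rewrite (eq_bigr (fun i : 'I_p.+1 => binZ ((v - 1) - (i : nat)%:Z) (p - i)%N)); last first.
  by move=> i _; rewrite /bump leq0n add1n subSS; congr binZ; rewrite -addn1 PoszD; ring.
by rewrite IH subrK -pascalZ.
Qed.

Lemma vandZ (u p : nat) (v : int) :
  \sum_(l < p.+1) ('C(u + l, l))%:R * binZ (v - (l : nat)%:Z) (p - l)%N
  = binZ (u%:Z + v + 1) p.
Proof.
elim: u p v => [|u IHu] p v.
  rewrite add0r -vand0; apply: eq_bigr => i _; by rewrite add0n binn mul1r.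
elim: p v => [|p IHp] v.
  by rewrite big_ord_recl big_ord0 addr0 !binZ0 bin0 mulr1.
have E1 := IHu p.+1 v.
have E2 := IHp (v - 1).
rewrite (_ : binZ (u.+1%:Z + v + 1) p.+1
   = binZ (u%:Z + v + 1) p.+1 + binZ (u.+1%:Z + (v - 1) + 1) p); last first.
  have -> : u.+1%:Z + (v - 1) + 1 = u%:Z + v + 1 by rewrite -addn1 PoszD; ring.
  have -> : u.+1%:Z + v + 1 = (u%:Z + v + 1) + 1 by rewrite -addn1 PoszD; ring.
  by rewrite pascalZ.
rewrite -E1 -E2 big_ord_recl [X in _ = X + _]big_ord_recl -addrA.
congr (_ + _); first by rewrite !addn0 !bin0.
rewrite -big_split; apply: eq_bigr => i _ /=.
rewrite /bump leq0n !add1n subSS.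
have -> : binZ (v - (i.+1)%:Z) (p - i)%N = binZ (v - 1 - (i : nat)%:Z) (p - i)%N.
  by congr binZ; rewrite -addn1 PoszD; ring.
rewrite addSn binS natrD mulrDl; congr (_ + _); by rewrite addnS addSn.
Qed.


Lemma binQ (n m : nat) : (m <= n)%N ->
  ('C(n, m))%:R = (n`!)%:R / ((m`!)%:R * ((n - m)`!)%:R) :> rat.
Proof.
move=> h; rewrite -(bin_fact h) !natrM.
have h1 : (m`!)%:R != 0 :> rat by rewrite pnatr_eq0 -lt0n fact_gt0.
have h2 : ((n - m)`!)%:R != 0 :> rat by rewrite pnatr_eq0 -lt0n fact_gt0.
by field; rewrite h1 h2.
Qed.

Lemma trinom (a j l : nat) :
  ('C(a + j, a) * 'C(a + j + l, l) = 'C(j + l, l) * 'C(a + j + l, a))%N.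
Proof.
apply/eqP; rewrite -(eqr_nat rat) !natrM; apply/eqP.
rewrite !binQ ?leq_addl ?leq_addr //; last by rewrite -addnA leq_addr.
rewrite addnK addKn addnK -addnA addKn.
have f x : (x`!)%:R != 0 :> rat by rewrite pnatr_eq0 -lt0n fact_gt0.
by field; rewrite !f.
Qed.

Lemma hockey (s m : nat) :
  (\sum_(a < s.+1) 'C(a + m, a) = 'C(s.+1 + m, s))%N.
Proof.
elim: s => [|s IH]; first by rewrite big_ord_recl big_ord0 !bin0.
by rewrite big_ord_recr /= IH [in RHS]addSn binS addnC.
Qed.

Lemma reidx (F : nat -> rat) (s : nat) :
  \sum_(1 <= t < s.+1) F t = \sum_(a < s) F (s - a)%N.
Proof.
rewrite big_nat_rev big_add1 /= big_mkord; apply: eq_bigr => i _.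
congr F; lia.
Qed.

Lemma part2 (n k s j : nat) (hk : (1 <= k)%N) :
  \sum_(1 <= t < s.+1)
        binZ (n%:Z - t%:Z) (k%:Z - 1) * binZ (s%:Z - t%:Z + j%:Z) (s%:Z - t%:Z)
  = \sum_(0 <= l < k)
        binZ (j%:Z + l%:Z) l%:Z
        * binZ (n%:Z - s%:Z - j%:Z - l%:Z - 1) (k%:Z - l%:Z - 1)
        * binZ (s%:Z + j%:Z + l%:Z) (s%:Z - 1).
Proof.
case: k hk => [//|k] _.
case: s => [|s].
  rewrite big_geq // big1 // => l _; rewrite [X in _ * X]binZ_neg ?mulr0 //.
have hk : Posz k.+1 - 1 = Posz k by rewrite -addn1 PoszD addrK.
rewrite reidx big_mkord.
pose v : int := n%:Z - s.+1%:Z - j%:Z - 1.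
pose B (l : nat) : rat := binZ (v - l%:Z) (k - l)%N.
transitivity (\sum_(a < s.+1) \sum_(l < k.+1)
   ('C(a + j + l, l) * 'C(a + j, a))%:R * B l).
  apply: eq_bigr => a _.
  have ha : (a <= s.+1)%N by apply: ltnW.
  have -> : s.+1%:Z - (s.+1 - a)%N%:Z + j%:Z = (a + j)%N.
    by rewrite -subzn // PoszD; ring.
  have -> : s.+1%:Z - (s.+1 - a)%N%:Z = a by rewrite -subzn //; ring.
  rewrite binZC hk.
  have -> : n%:Z - (s.+1 - a)%N%:Z = (a + j)%N%:Z + v + 1.
    by rewrite -subzn // !PoszD /v; ring.
  rewrite -vandZ mulr_suml; apply: eq_bigr => l _.
  by rewrite natrM /B; ring.
rewrite exchange_big /=; apply: eq_bigr => l _.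
have hl : (l <= k)%N by rewrite -ltnS.
rewrite -mulr_suml.
rewrite (eq_bigr (fun a : 'I_s.+1 => ('C(j + l, l) * 'C(a + (j + l), a))%:R)); last first.
  by move=> a _; rewrite mulnC trinom addnA.
rewrite -natr_sum -big_distrr /= hockey.
have -> : Posz j + Posz l = (j + l)%N by rewrite PoszD.
have -> : Posz s.+1 + Posz j + Posz l = (s.+1 + (j + l))%N by rewrite !PoszD; ring.
have -> : Posz s.+1 - 1 = s by rewrite -addn1 PoszD addrK.
have -> : Posz k.+1 - Posz l - 1 = (k - l)%N by rewrite -subzn // -hk; ring.
rewrite !binZC /B /v natrM.
have -> : n%:Z - s.+1%:Z - j%:Z - l%:Z - 1 = n%:Z - s.+1%:Z - j%:Z - 1 - l%:Z by ring.
ring.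
Qed.


Lemma Qcoef (n k m : nat) :
  (Qnk n k)`_m = if (m < k)%N then 0 else (-1) ^+ (m - k) * ('C(n, m))%:R.
Proof.
rewrite /Qnk coef_sum.
under eq_bigr => i _ do rewrite coefZ coefXn.
case: (ltnP m k) => hmk.
  rewrite big_nat_cond big1 // => i /andP[/andP[hi _] _].
  by rewrite (_ : (m == i) = false) ?mulr0 //; apply/negbTE; lia.
case: (leqP m n) => hmn.
  rewrite (bigD1_seq m) ?mem_index_iota ?iota_uniq //=; last by lia.
  rewrite eqxx mulr1 big1 ?addr0 // => i hi.
  by rewrite eq_sym (negbTE hi) mulr0.
rewrite bin_small // mulr0 big_nat_cond big1 // => i /andP[/andP[_ hi] _].
by rewrite (_ : (m == i) = false) ?mulr0 //; apply/negbTE; lia.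
Qed.

Definition fdiff (f : fps) : fps :=
  fun m => f m - (if (0 < m)%N then f m.-1 else 0).

Lemma fps_one (f : fps) m : fps_mul (fps_of_poly 1) f m = f m.
Proof.
rewrite /fps_mul big_ord_recl /fps_of_poly coef1 /= mul1r subn0 big1 ?addr0 //.
by move=> i _; rewrite coef1 mul0r.
Qed.

Lemma fps_ext p f g m : (forall x, f x = g x) ->
  fps_mul p f m = fps_mul p g m.
Proof. by move=> h; apply: eq_bigr => i _; rewrite h. Qed.

Lemma fps_step (p : {poly rat}) (f : fps) m :
  fps_mul (fps_of_poly (p * (1 - 'X))) f m = fps_mul (fps_of_poly p) (fdiff f) m.
Proof.
rewrite /fps_mul /fps_of_poly /fdiff.
under eq_bigr => i _ do rewrite mulrBr mulr1 coefB coefMX mulrBl.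
under [RHS]eq_bigr => i _ do rewrite mulrBr.
rewrite !sumrB; congr (_ - _).
rewrite big_ord_recl /= mul0r add0r big_ord_recr /= subnn /= mulr0 addr0.
apply: eq_bigr => i _.
rewrite subn_gt0 ltn_ord add0n.
congr (_ * f _); rewrite /bump /= add1n; lia.
Qed.


Definition cc (n k s : nat) := fun j : nat =>
    (-1) ^+ j * binZ (n%:Z - s%:Z) (k%:Z + j%:Z)
    + \sum_(1 <= t < s.+1)
        binZ (n%:Z - t%:Z) (k%:Z - 1) * binZ (s%:Z - t%:Z + j%:Z) (s%:Z - t%:Z).

Lemma cc_nat (n k s j : nat) : cc n k s j =
    (-1) ^+ j * binZ (n%:Z - s%:Z) (k + j)%N
    + \sum_(1 <= t < s.+1) binZ (n%:Z - t%:Z) (k%:Z - 1) * ('C(s - t + j, s - t))%:R.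
Proof.
rewrite /cc PoszD; congr (_ + _); apply: eq_big_nat => t /andP[_ ht].
have hts : (t <= s)%N by []. by rewrite (subzn hts) -PoszD binZC.
Qed.

Lemma Z0 n k s : (1 <= k)%N -> cc n k s.+1 0 = cc n k s 0.
Proof.
case: k => [//|k] _.
have hk : Posz k.+1 - 1 = k by rewrite -addn1 PoszD addrK.
rewrite !cc_nat hk big_nat_recr //= subnn bin0 mulr1 !expr0 !mul1r !addn0.
have e1 : binZ (n%:Z - s.+1%:Z) k.+1 + binZ (n%:Z - s.+1%:Z) k = binZ (n%:Z - s%:Z) k.+1.
  have -> : n%:Z - s%:Z = (n%:Z - s.+1%:Z) + 1 by rewrite -addn1 PoszD; ring.
  by rewrite pascalZ.
set S1 := \sum_(1 <= i < s.+1) _. set S2 := \sum_(1 <= i < s.+1) _.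
have e2 : S1 = S2.
  apply: eq_big_nat => t /andP[_ ht]; congr (_ * _).
  by rewrite !addn0 !binn.
rewrite -e1 e2; ring.
Qed.

Lemma Zj n k s j : cc n k s.+1 j.+1 - cc n k s.+1 j = cc n k s j.+1.
Proof.
rewrite !cc_nat.
have e2 : \sum_(1 <= t < s.+2) binZ (n%:Z - t%:Z) (k%:Z - 1) * ('C(s.+1 - t + j.+1, s.+1 - t))%:R
  - \sum_(1 <= t < s.+2) binZ (n%:Z - t%:Z) (k%:Z - 1) * ('C(s.+1 - t + j, s.+1 - t))%:R
  = \sum_(1 <= t < s.+1) binZ (n%:Z - t%:Z) (k%:Z - 1) * ('C(s - t + j.+1, s - t))%:R.
  rewrite -sumrB big_nat_recr //= subnn !bin0 subrr addr0.
  apply: eq_big_nat => t /andP[ht1 ht].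
  rewrite -mulrBr; congr (_ * _).
  have -> : (s.+1 - t = (s - t).+1)%N by lia.
  by rewrite !addSn !addnS binS natrD; ring.
have e1 : (-1) ^+ j.+1 * binZ (n%:Z - s.+1%:Z) (k + j.+1)%N
   - (-1) ^+ j * binZ (n%:Z - s.+1%:Z) (k + j)%N
   = (-1) ^+ j.+1 * binZ (n%:Z - s%:Z) (k + j.+1)%N.
  have -> : n%:Z - s%:Z = (n%:Z - s.+1%:Z) + 1 by rewrite -addn1 PoszD; ring.
  rewrite addnS pascalZ exprS; ring.
have H := congr2 (fun a b : rat => a + b) e1 e2.
apply: eq_trans _ H; ring.
Qed.


Lemma part1 n k (hk : (1 <= k)%N) s m :
  fps_mul (fps_of_poly ((1 - 'X) ^+ s)) (shift_series k (cc n k s)) m = (Qnk n k)`_m.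
Proof.
elim: s m => [|s IH] m.
  rewrite expr0 fps_one Qcoef /shift_series; case: ltnP => h //.
  by rewrite /cc big_geq // addr0 subr0 -PoszD subnKC // binZC.
rewrite exprSr fps_step -IH; apply: fps_ext => x.
rewrite /fdiff /shift_series.
case: (ltnP x k) => hx.
  have -> : (x.-1 < k)%N by apply: leq_ltn_trans (leq_pred x) hx.
  by case: ifP => _; rewrite subr0.
case eq: (x - k)%N => [|j].
  have -> : (x.-1 < k)%N by lia.
  by case: ifP => _; rewrite subr0 Z0.
have -> : (0 < x)%N by lia.
have -> : (x.-1 < k)%N = false by apply/negbTE; lia.
have -> : (x.-1 - k)%N = j by lia.
exact: Zj.
Qed.

Theorem proposition3p7 (n k s : nat) (hk1 : (1 <= k)%N) (hkn : (k <= n)%N) :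
  let c1 := fun j : nat =>
    (-1) ^+ j * binZ (n%:Z - s%:Z) (k%:Z + j%:Z)
    + \sum_(1 <= t < s.+1)
        binZ (n%:Z - t%:Z) (k%:Z - 1) * binZ (s%:Z - t%:Z + j%:Z) (s%:Z - t%:Z) in
  let c2 := fun j : nat =>
    (-1) ^+ j * binZ (n%:Z - s%:Z) (k%:Z + j%:Z)
    + \sum_(0 <= l < k)
        binZ (j%:Z + l%:Z) l%:Z
        * binZ (n%:Z - s%:Z - j%:Z - l%:Z - 1) (k%:Z - l%:Z - 1)
        * binZ (s%:Z + j%:Z + l%:Z) (s%:Z - 1) in
  fps_mul (fps_of_poly ((1 - 'X) ^+ s)) (shift_series k c1) = fps_of_poly (Qnk n k)
  /\ (forall j : nat, c1 j = c2 j).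
Proof.
move=> c1 c2; split.
  by apply: functional_extensionality => m; exact: part1.
by move=> j; rewrite /c1 /c2; congr (_ + _); exact: part2.
Qed.
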